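(* For all sufficiently large $n$, for every $k\ge t$ with $d_{\max}+1<n-k\le n/e^2$, we have $a_{k_1,\dots,k_x}<n^{-(2+x)}$ for every tuple $(k_1,\dots,k_x)$ of integers with $t_i\le k_i\le a_i$ and $\sum_i k_i=k$, and $\alpha_k\le\frac{1}{n^2}$.
   Context: Random graph model: $V$ is a set of $n$ vertices, $B\subseteq V$ a target set with $|B|=t$, each $v\in V$ has a prescribed out-degree $d_v$ with $2\le d_{\min}\le d_v\le d_{\max}$ (constants independent of $n$), and for each $v$ independently its out-neighbour set is chosen uniformly among all $d_v$-element subsets of $V$. Let $d_1,\dots,d_x$ be the distinct out-degrees, $a_i$ the number of vertices of out-degree $d_i$, $t_i$ the number of vertices of $B$ of out-degree $d_i$. For $S\supseteq B$ containing $k_i$ vertices of out-degree $d_i$, $R(k_1,\dots,k_x)$ is the probability that every vertex of $S$ has a directed path to $B$ lying inside $S$. For $k=\sum_i k_i$ with $t_i\le k_i\le a_i$, $a_{k_1,\dots,k_x}=\left(\prod_{i=1}^x\binom{a_i-t_i}{k_i-t_i}\left(\binom{n-k}{d_i}/\binom{n}{d_i}\right)^{a_i-k_i}\right)R(k_1,\dots,k_x)$, with the factor $(\binom{n-k}{d_i}/\binom{n}{d_i})^{a_i-k_i}$ equal to $1$ when $a_i=k_i$, and $\alpha_k=\sum_{\sum_i k_i=k,\ t_i\le k_i\le a_i}a_{k_1,\dots,k_x}$ (which is the probability that the set of vertices having a directed path to $B$ has exactly $k$ elements). *)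

(* Defs.v *)
From mathcomp Require Import all_boot all_order all_algebra.
From mathcomp Require Import reals.
From mathcomp.analysis Require Import sequences exp.
Set Implicit Arguments. Unset Strict Implicit. Unset Printing Implicit Defensive.
Import Order.TTheory GRing.Theory Num.Theory.
Local Open Scope ring_scope.

Section RandomGraph.
Variable R : realType.
Variable n : nat.
Variable d : 'I_n -> nat.
Variable B : {set 'I_n}.            (* target set, t = #|B| *)

Definition degs : seq nat := undup [seq d v | v <- enum 'I_n].
Definition ndeg : nat := size degs.
Definition deg_i (i : 'I_ndeg) : nat := nth 0%N degs i.
Definition acount (i : 'I_ndeg) : nat := #|[set v | d v == deg_i i]|.
Definition tcount (i : 'I_ndeg) : nat := #|[set v in B | d v == deg_i i]|.

(* outcome of the random graph: out-neighbour set of each vertex *)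
Definition outcome := {ffun 'I_n -> {set 'I_n}}.
Definition valid (N : outcome) : bool := [forall v, #|N v| == d v].

(* uniform product measure: each N v uniform among d v-subsets, independently *)
Definition prob (E : pred outcome) : R :=
  #|[set N | valid N & E N]|%:R / #|[set N : outcome | valid N]|%:R.

Definition reaches_inside (S : {set 'I_n}) (N : outcome) : bool :=
  [forall v in S, [exists b in B,
     connect (fun u w => [&& u \in S, w \in S & w \in N u]) v b]].

Definition has_counts (kk : 'I_ndeg -> nat) (S : {set 'I_n}) : bool :=
  (B \subset S) && [forall i, #|[set v in S | d v == deg_i i]| == kk i].

(* R(k_1,...,k_x): well defined since it only depends on the counts (by symmetry);
   we evaluate it at some set S with these counts. *)
Definition Rprob (kk : 'I_ndeg -> nat) : R :=
  match [pick S | has_counts kk S] with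
  | Some S0 => prob (reaches_inside S0)
  | None => 0
  end.

Definition a_coef (kk : 'I_ndeg -> nat) : R :=
  let k := (\sum_i kk i)%N in
  (\prod_i ('C(acount i - tcount i, kk i - tcount i)%:R
            * ('C(n - k, deg_i i)%:R / 'C(n, deg_i i)%:R) ^+ (acount i - kk i)))
  * Rprob kk.

Definition admissible (k : nat) (kk : 'I_ndeg -> nat) : bool :=
  [forall i, (tcount i <= kk i <= acount i)%N] && ((\sum_i kk i)%N == k).

(* alpha_k : sum over all admissible tuples (each k_i <= a_i <= n) *)
Definition alpha (k : nat) : R :=
  \sum_(kk : {ffun 'I_ndeg -> 'I_n.+1} | admissible k (fun i => nat_of_ord (kk i)))
     a_coef (fun i => nat_of_ord (kk i)).

End RandomGraph.

Arguments deg_i {n} d i.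
Arguments acount {n} d i.
Arguments tcount {n} d B i.
Arguments a_coef R {n} d B kk.
Arguments Rprob R {n} d B kk.
Arguments admissible {n} d B k kk.

(* Main.v *)
Require Import Defs.
From mathcomp Require Import all_boot all_order all_algebra.
From mathcomp Require Import reals.
From mathcomp.analysis Require Import sequences exp.
From mathcomp Require Import zify ring lra.
Import Order.TTheory GRing.Theory Num.Theory.

Lemma binM A B j l : 'C(A, j) * 'C(B, l) <= 'C(A + B, j + l).
Proof.
elim: B l => [|B IH] [|l].
- by rewrite bin0 muln1 !addn0.
- by rewrite bin0n muln0.
- by rewrite bin0 muln1 addn0 leq_bin2l // leq_addr.
- rewrite binS mulnDr addnS addnS binS.
  apply: leq_add; first by rewrite -addnS; exact: IH.
  exact: IH.
Qed.

Lemma prod_bin (I : Type) (r : seq I) (A J : I -> nat) :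
  \prod_(i <- r) 'C(A i, J i) <= 'C(\sum_(i <- r) A i, \sum_(i <- r) J i).
Proof.
elim: r => [|x r IH]; first by rewrite !big_nil.
rewrite !big_cons; apply: leq_trans (binM _ _ _ _).
by rewrite leq_mul2l IH orbT.
Qed.

Lemma bin_le_exp n m : 'C(n, m) <= n ^ m.
Proof.
elim: m => [|m IH]; first by rewrite bin0 expn0.
apply: (@leq_trans (m.+1 * 'C(n, m.+1))); first by rewrite leq_pmull.
rewrite mul_bin_left expnS; apply: leq_mul => //; exact: leq_subr.
Qed.

Lemma bin_ratio m n d : m <= n -> 'C(m, d) * n ^ d <= 'C(n, d) * m ^ d.
Proof.
move=> mn; elim: d => [|d IH]; first by rewrite !bin0 !expn0.
rewrite -(@leq_pmul2l d.+1) //.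
have e1 := mul_bin_left m d. have e2 := mul_bin_left n d.
have h1 : (m - d) * n <= (n - d) * m by nia.
have h := leq_mul h1 IH.
rewrite !expnS.
have -> : d.+1 * ('C(m, d.+1) * (n * n ^ d)) = (m - d) * n * ('C(m, d) * n ^ d).
  by rewrite mulnA e1; ring.
have -> : d.+1 * ('C(n, d.+1) * (m * m ^ d)) = (n - d) * m * ('C(n, d) * m ^ d).
  by rewrite mulnA e2; ring.
exact: h.
Qed.


Local Open Scope ring_scope.
Section Real.
Variable R : realType.

Lemma e_bound (m : nat) : (1 <= m)%N ->
  (m.+1%:R : R) ^+ (2 * m) <= expR 1 ^+ 2 * m%:R ^+ (2 * m).
Proof.
move=> m1.
have mpos : (0 : R) < m%:R by rewrite ltr0n.
have h1 : (m.+1%:R / m%:R : R) <= expR (m%:R^-1).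
  apply: le_trans (expR_ge1Dx _).
  by rewrite -natr1 mulrDl divff ?gt_eqF // mul1r addrC.
have h2 : (m.+1%:R / m%:R : R) ^+ m <= expR 1.
  have -> : expR 1 = expR (m%:R^-1) ^+ m :> R.
    by rewrite -expRM_natl mulfV ?gt_eqF.
  apply: lerXn2r => //; rewrite nnegrE ?divr_ge0 ?ler0n ?ltW ?expR_gt0 //.
have h3 : (m.+1%:R : R) ^+ m <= expR 1 * m%:R ^+ m.
  rewrite -ler_pdivrMr ?exprn_gt0 // -expr_div_n //.
have h4 := lerXn2r 2 _ _ h3.
rewrite mulnC !exprM -exprMn.
apply: h4; rewrite nnegrE ?exprn_ge0 ?mulr_ge0 ?ler0n ?ltW ?expR_gt0 //. by rewrite exprn_gt0.
Qed.

Definition g (n m : nat) : R := 'C(n, m)%:R * ((m%:R / n%:R) ^+ 2) ^+ m.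

Lemma gE n m : g n m = 'C(n, m)%:R * m%:R ^+ (2 * m) / n%:R ^+ (2 * m).
Proof. by rewrite /g -exprM expr_div_n mulrA. Qed.

Lemma g_step n m : (1 <= m)%N -> expR 1 ^+ 2 * m.+1%:R <= n%:R :> R ->
  g n m.+1 <= g n m.
Proof.
move=> m1 hn.
have epos : (0 : R) < expR 1 ^+ 2 by rewrite exprn_gt0 ?expR_gt0.
have npos : (0 : R) < n%:R.
  by apply: lt_le_trans hn; rewrite mulr_gt0 // ltr0n.
rewrite !gE.
have -> : (2 * m.+1 = (2 * m).+2)%N by lia.
rewrite ler_pdivrMr ?exprn_gt0 //.
set c := ('C(n, m)%:R : R).
set P := (m%:R ^+ (2 * m) : R).
rewrite (_ : c * P / n%:R ^+ (2 * m) * n%:R ^+ (2 * m).+2 = c * P * (n%:R * n%:R)); last first.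
  rewrite !exprS; field; by rewrite gt_eqF ?exprn_gt0.
set Q := (m.+1%:R ^+ (2 * m) : R).
have hQ : Q <= expR 1 ^+ 2 * P by exact: e_bound.
have eb : (m.+1 * 'C(n, m.+1))%:R = ((n - m) * 'C(n, m))%:R :> R.
  by rewrite mul_bin_left.
rewrite !natrM in eb.
have hnm : ((n - m)%N%:R : R) <= n%:R by rewrite ler_nat leq_subr.
have c0 : 0 <= c by rewrite ler0n.
have P0 : 0 <= P by rewrite exprn_ge0 ?ler0n.
have Q0 : 0 <= Q by rewrite exprn_ge0 ?ler0n.
rewrite !exprS.
have -> : 'C(n, m.+1)%:R * (m.+1%:R * (m.+1%:R * Q)) =
   (m.+1%:R * 'C(n, m.+1)%:R) * (m.+1%:R * Q) :> R by ring.
rewrite eb.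
have hmQ : m.+1%:R * Q <= n%:R * P.
  apply: le_trans (_ : m.+1%:R * (expR 1 ^+ 2 * P) <= _).
    by apply: ler_wpM2l; rewrite ?ler0n.
  by rewrite mulrA [_ * expR _ ^+ 2]mulrC ler_wpM2r.
have -> : c * P * (n%:R * n%:R) = (n%:R * c) * (n%:R * P) by ring.
rewrite -/c.
apply: ler_pM; rewrite ?mulr_ge0 ?ler0n //.
by apply: ler_wpM2r.
Qed.

Lemma g_chain n m0 i : (1 <= m0)%N -> expR 1 ^+ 2 * (m0 + i)%:R <= n%:R :> R ->
  g n (m0 + i) <= g n m0.
Proof.
move=> m1; elim: i => [|i IH] h; first by rewrite addn0.
rewrite addnS; apply: le_trans; first apply: g_step.
- by apply: leq_trans m1 (leq_addr _ _).
- by rewrite -addnS.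
apply: IH; apply: le_trans h; apply: ler_wpM2l; first by rewrite exprn_ge0 ?expR_ge0.
by rewrite ler_nat addnS.
Qed.

Lemma g_m0 n m0 : (0 < n)%N -> g n m0 <= (m0 ^ (2 * m0))%:R / n%:R ^+ m0.
Proof.
move=> n0; have npos : (0 : R) < n%:R by rewrite ltr0n.
rewrite gE natrX.
have hC : ('C(n, m0)%:R : R) <= n%:R ^+ m0 by rewrite -natrX ler_nat bin_le_exp.
have -> : (n%:R : R) ^+ (2 * m0) = n%:R ^+ m0 * n%:R ^+ m0.
  by rewrite -exprD; congr (_ ^+ _); lia.
set P := (m0%:R ^+ (2 * m0) : R).
have Nm : (0 : R) < n%:R ^+ m0 by rewrite exprn_gt0.
rewrite ler_pdivrMr ?mulr_gt0 //.
rewrite (_ : P / n%:R ^+ m0 * (n%:R ^+ m0 * n%:R ^+ m0) = n%:R ^+ m0 * P); last first.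
  by field; rewrite gt_eqF.
by rewrite ler_wpM2r // exprn_ge0 // ler0n.
Qed.
End Real.
Local Close Scope ring_scope.
Lemma sum_count (T : eqType) (s : seq T) (a : pred T) :
  \sum_(x <- s) (a x : nat) = count a s.
Proof. by elim: s => [|x s IH]; rewrite ?big_nil ?big_cons ?IH. Qed.

Lemma deg_i_mem n (d : 'I_n -> nat) i : exists v, deg_i d i = d v.
Proof.
have : deg_i d i \in degs d by apply: mem_nth; exact: ltn_ord.
by rewrite /degs mem_undup => /mapP [v _ ->]; exists v.
Qed.

Lemma ndeg_le n (d : 'I_n -> nat) dmin dmax : (2 <= dmin)%N ->
  (forall v, dmin <= d v <= dmax)%N -> (ndeg d <= dmax.-1)%N.
Proof.
move=> h2 hd; rewrite /ndeg.
rewrite -(size_iota 2 dmax.-1); apply: uniq_leq_size; first exact: undup_uniq.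
move=> x; rewrite mem_undup => /mapP [v _ ->]; rewrite mem_iota.
have := hd v; lia.
Qed.

Lemma sum_acount n (d : 'I_n -> nat) : \sum_i acount d i = n.
Proof.
rewrite /acount.
rewrite (eq_bigr (fun i => \sum_v (d v == deg_i d i : nat))); last first.
  move=> i _; rewrite cardsE -sum1_card big_mkcond /=.
  apply: eq_bigr => v _; rewrite unfold_in /=; case: ifP => /= h; by rewrite (_ : (d v == deg_i d i) = eqn (d v) (deg_i d i)) // h.
rewrite exchange_big /=.
rewrite -[n in _ = n]card_ord -sum1_card.
apply: eq_bigr => v _.
have := @big_nth nat 0 addn nat 0 (degs d) xpredT (fun x => (d v == x : nat)).
move=> e; rewrite /deg_i /ndeg -(big_mkord xpredT (fun i => (d v == nth 0 (degs d) i : nat))) -e sum_count.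
rewrite (@eq_count _ _ (pred1 (d v))); last by move=> x; rewrite /= eq_sym.
rewrite count_uniq_mem ?undup_uniq //.
have -> : d v \in degs d by rewrite /degs mem_undup; apply: map_f; rewrite mem_enum.
by [].
Qed.

Local Open Scope ring_scope.

Lemma Rprob_01 (R : realType) n (d : 'I_n -> nat) B kk : 0 <= Rprob R d B kk <= 1.
Proof.
rewrite /Rprob; case: pickP => [S _|_]; last by rewrite lexx ler01.
rewrite /prob.
have ab : (#|[set N | valid d N & reaches_inside B S N]| <= #|[set N : outcome n | valid d N]|)%N.
  by apply: subset_leq_card; apply/subsetP => N; rewrite !inE => /andP[].
move: ab; set a := #|_|; set b := #|_| => ab.
case b0: (b == 0)%N.
  by move/eqP: b0 => ->; rewrite invr0 mulr0 lexx ler01.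
rewrite divr_ge0 ?ler0n //= ler_pdivrMr ?ltr0n ?lt0n ?b0 // mul1r ler_nat //.
Qed.

Lemma a_bound (R : realType) n (d : 'I_n -> nat) (B : {set 'I_n}) dmin dmax k
  (kk : 'I_(ndeg d) -> nat) :
  (2 <= dmin)%N -> (forall v, dmin <= d v <= dmax)%N ->
  (forall i, tcount d B i <= kk i <= acount d i)%N ->
  (\sum_i kk i)%N = k -> (dmax.+1 < n - k)%N ->
  expR 1 ^+ 2 * (n - k)%:R <= n%:R :> R ->
  a_coef R d B kk <= ((dmax.+2 ^ (2 * dmax.+2))%:R / n%:R ^+ dmax.+2).
Proof.
move=> h2 hd hk hsum hm he.
set m := (n - k)%N.
have n0 : (0 < n)%N by lia.
have npos : (0 : R) < n%:R by rewrite ltr0n.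
have hdeg : forall i, (dmin <= deg_i d i <= dmax)%N.
  by move=> i; have [v ->] := deg_i_mem _ d i; exact: hd.
set q : R := (m%:R / n%:R) ^+ 2.
have q0 : 0 <= q by rewrite exprn_ge0 // divr_ge0 ?ler0n.
have mn1 : (m%:R / n%:R : R) <= 1 by rewrite ler_pdivrMr // mul1r ler_nat leq_subr.
have mn0 : (0 : R) <= m%:R / n%:R by rewrite divr_ge0 ?ler0n.
rewrite /a_coef /= hsum -/m.
set P := \prod_i _.
have P0 : 0 <= P.
  apply: prodr_ge0 => i _; apply: mulr_ge0; rewrite ?ler0n //.
  by apply: exprn_ge0; rewrite divr_ge0 ?ler0n.
have hR := @Rprob_01 R _ d B kk; move/andP: hR => [hR0 hR1].
apply: le_trans (_ : P <= _); first by rewrite ler_piMr.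
apply: (@le_trans _ _ (\prod_i ('C(acount d i, acount d i - kk i)%:R * q ^+ (acount d i - kk i)))).
  apply: ler_prod => i _.
  have [hti hai] := andP (hk i).
  have di := hdeg i.
  have Cn0 : (0 : R) < 'C(n, deg_i d i)%:R by rewrite ltr0n bin_gt0; lia.
  have Y0 : (0 : R) <= 'C(m, deg_i d i)%:R / 'C(n, deg_i d i)%:R by rewrite divr_ge0 ?ler0n.
  have Yq : ('C(m, deg_i d i)%:R / 'C(n, deg_i d i)%:R : R) <= q.
    apply: (@le_trans _ _ ((m%:R / n%:R) ^+ deg_i d i)).
      rewrite ler_pdivrMr // expr_div_n mulrAC ler_pdivlMr ?exprn_gt0 //.
      rewrite -!natrX -!natrM ler_nat [X in (_ <= X)%N]mulnC.
      by apply: bin_ratio; exact: leq_subr.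
    by apply: ler_wiXn2l => //; lia.
  rewrite mulr_ge0 ?ler0n ?exprn_ge0 //=.
  apply: ler_pM; rewrite ?ler0n ?exprn_ge0 //.
    rewrite ler_nat.
    have -> : (kk i - tcount d B i = (acount d i - tcount d B i) - (acount d i - kk i))%N by lia.
    rewrite bin_sub; last by lia.
    by apply: leq_bin2l; exact: leq_subr.
  by apply: lerXn2r; rewrite ?nnegrE.
rewrite big_split /= -natr_prod prodrXr.
have hs : (\sum_i (acount d i - kk i))%N = m.
  by rewrite sumnB; [rewrite sum_acount hsum | move=> i _; have /andP[] := hk i].
rewrite hs.
apply: (@le_trans _ _ (g R n m)).
  rewrite /g -/q ler_wpM2r ?exprn_ge0 // ler_nat.
  by have := @prod_bin _ (index_enum 'I_(ndeg d)) (acount d) (fun i => acount d i - kk i)%N; rewrite sum_acount hs.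
have -> : m = (dmax.+2 + (m - dmax.+2))%N by lia.
apply: le_trans; first apply: g_chain => //.
  by rewrite (_ : (dmax.+2 + (m - dmax.+2))%N = m); [exact: he | lia].
exact: g_m0.
Qed.

Theorem lemma16 (R : realType) (dmin dmax : nat) :
  (2 <= dmin)%N -> (dmin <= dmax)%N ->
  exists N : nat, forall n : nat, (N <= n)%N ->
  forall (d : 'I_n -> nat) (B : {set 'I_n}),
    (forall v, (dmin <= d v <= dmax)%N) ->
  forall k : nat, (#|B| <= k)%N -> (dmax.+1 < n - k)%N ->
    (n - k)%:R <= n%:R / (expR 1 ^+ 2) :> R ->
    (forall kk : 'I_(ndeg d) -> nat,
       (forall i, (tcount d B i <= kk i <= acount d i)%N) ->
       (\sum_i kk i)%N = k ->
       a_coef R d B kk < (n%:R ^+ (2 + ndeg d))^-1)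
    /\ alpha R d B k <= (n%:R ^+ 2)^-1.
Proof.
move=> h2 hmm.
set C0 := (dmax.+2 ^ (2 * dmax.+2))%N.
exists (2 ^ dmax.+2 * C0).+1 => n hN d B hd k hB hm he.
have n0 : (0 < n)%N by lia.
have npos : (0 : R) < n%:R by rewrite ltr0n.
have hx := @ndeg_le _ d dmin dmax h2 hd.
have epos : (0 : R) < expR 1 ^+ 2 by rewrite exprn_gt0 ?expR_gt0.
have he' : expR 1 ^+ 2 * (n - k)%:R <= n%:R :> R.
  by rewrite mulrC -ler_pdivlMr.
have C0pos : (0 < C0)%N by rewrite expn_gt0.
have C0n : (C0 < n)%N.
  have : (0 < 2 ^ dmax.+2)%N by rewrite expn_gt0.
  move: hN; set a := (2 ^ dmax.+2)%N; nia.
set M : R := (C0%:R / n%:R ^+ dmax.+2).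
have M0 : 0 <= M by rewrite divr_ge0 ?exprn_ge0 ?ler0n.
have hab : forall kk : 'I_(ndeg d) -> nat,
    (forall i, (tcount d B i <= kk i <= acount d i)%N) ->
    (\sum_i kk i)%N = k -> a_coef R d B kk <= M.
  by move=> kk hk hs; exact: (@a_bound R n d B dmin dmax k kk h2 hd hk hs hm he').
split.
  move=> kk hk hs; apply: le_lt_trans (hab kk hk hs) _.
  rewrite /M ltr_pdivrMr ?exprn_gt0 // mulrC ltr_pdivlMr ?exprn_gt0 //.
  rewrite -!natrX -natrM ltr_nat.
  apply: (@leq_ltn_trans (C0 * n ^ dmax.+1)).
    by rewrite leq_mul2l leq_pexp2l ?orbT //; lia.
  by rewrite [(n ^ dmax.+2)%N]expnS ltn_pmul2r ?expn_gt0 ?n0.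
rewrite /alpha.
apply: (@le_trans _ _ (\sum_(kk : {ffun 'I_(ndeg d) -> 'I_n.+1}) M)).
  rewrite big_mkcond /=; apply: ler_sum => kk _.
  case: ifP => // /andP [/forallP hf /eqP hs].
  by apply: hab => // i; exact: hf.
rewrite big_const card_ffun !card_ord iter_addr_0 -[X in X <= _]mulr_natl /M mulrA.
rewrite ler_pdivrMr ?exprn_gt0 // [X in _ <= X]mulrC ler_pdivlMr ?exprn_gt0 //.
rewrite -!natrX -!natrM ler_nat.
have h1 : (n.+1 ^ ndeg d <= 2 ^ dmax.+2 * n ^ ndeg d)%N.
  apply: (@leq_trans ((2 * n) ^ ndeg d)).
    case: (ndeg d) => [|x] //; rewrite leq_exp2r //; lia.
  rewrite expnMn leq_mul2r leq_pexp2l ?orbT //; lia.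
apply: (@leq_trans (2 ^ dmax.+2 * C0 * n ^ (ndeg d).+2)).
  apply: leq_trans (leq_mul (leq_mul h1 (leqnn C0)) (leqnn (n ^ 2))) _.
  apply: eq_leq; rewrite (_ : (ndeg d).+2 = ndeg d + 2)%N ?expnD; last lia.
  set T := (2 ^ _)%N; set X := (n ^ ndeg d)%N; set Y := (n ^ 2)%N; ring.
apply: (@leq_trans (n * n ^ (ndeg d).+2)).
  by rewrite leq_mul2r; apply/orP; right; lia.
rewrite -expnS leq_pexp2l //; lia.
Qed.
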